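(* Let $\mathcal{G}$ be the real Lie algebra with basis $X_1,X_2,X_3$ and brackets $[X_1,X_2]=0$, $[X_2,X_3]=X_1$, $[X_3,X_1]=X_2$ (Bianchi type $VII_0$). Every real Manin triple $(\mathcal{D},\mathcal{G}',\tilde{\mathcal{G}}')$ with $\mathcal{G}'\cong\mathcal{G}$ is isomorphic to exactly one Manin triple $(\mathcal{D},\mathcal{G},\tilde{\mathcal{G}})$ in which $\tilde{\mathcal{G}}$, in the basis $\tilde X^1,\tilde X^2,\tilde X^3$ dual to $X_1,X_2,X_3$, has one of the following bracket structures: (a) (Bianchi $I$) all brackets zero; (b) (Bianchi $II$) (i) $[\tilde X^1,\tilde X^2]=\tilde X^3$, $[\tilde X^2,\tilde X^3]=0$, $[\tilde X^3,\tilde X^1]=0$; (ii) $[\tilde X^1,\tilde X^2]=-\tilde X^3$, $[\tilde X^2,\tilde X^3]=0$, $[\tilde X^3,\tilde X^1]=0$; (c) (Bianchi $IV$) $[\tilde X^1,\tilde X^2]=b(-\tilde X^2+\tilde X^3)$, $[\tilde X^2,\tilde X^3]=0$, $[\tilde X^3,\tilde X^1]=b\tilde X^3$, $b\in\mathbb{R}\setminus\{0\}$; (d) (Bianchi $V$) (i) $[\tilde X^1,\tilde X^2]=-\tilde X^2$, $[\tilde X^2,\tilde X^3]=0$, $[\tilde X^3,\tilde X^1]=\tilde X^3$; (ii) $[\tilde X^1,\tilde X^2]=0$, $[\tilde X^2,\tilde X^3]=b\tilde X^2$, $[\tilde X^3,\tilde X^1]=-b\tilde X^1$, $b>0$.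
   Context: A real Manin triple $(\mathcal{D},\mathcal{G},\tilde{\mathcal{G}})$ consists of a real Lie algebra $\mathcal{D}$ with a symmetric, ad-invariant, nondegenerate bilinear form $\langle\cdot,\cdot\rangle$, and two maximally isotropic Lie subalgebras $\mathcal{G},\tilde{\mathcal{G}}$ with $\mathcal{D}=\mathcal{G}\oplus\tilde{\mathcal{G}}$ as vector spaces; here $\dim\mathcal{D}=6$, $\dim\mathcal{G}=\dim\tilde{\mathcal{G}}=3$. Bases $X_i$ of $\mathcal{G}$ and $\tilde X^i$ of $\tilde{\mathcal{G}}$ are dual if $\langle X_i,X_j\rangle=0$, $\langle X_i,\tilde X^j\rangle=\delta_i^j$, $\langle\tilde X^i,\tilde X^j\rangle=0$. If $[X_i,X_j]=f_{ij}{}^kX_k$ and $[\tilde X^i,\tilde X^j]=\tilde f^{ij}{}_k\tilde X^k$, ad-invariance forces $[X_i,\tilde X^j]=f_{ki}{}^j\tilde X^k+\tilde f^{jk}{}_iX_k$, so the triple is determined by the brackets of $\mathcal{G}$ and $\tilde{\mathcal{G}}$ in dual bases. Two Manin triples are isomorphic if there is a Lie algebra isomorphism of the doubles preserving the bilinear forms and mapping first subalgebra to first subalgebra and second to second; equivalently, they are related by a change of basis $X_i'=X_kA^k{}_i$, $\tilde X'^j=(A^{-1})^j{}_k\tilde X^k$. Different values of the parameter $b$ give non-isomorphic triples. *)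

(* Defs.v *)
From HB Require Import structures.
From mathcomp Require Import all_boot all_order all_algebra.
From mathcomp Require Import reals.
Set Implicit Arguments. Unset Strict Implicit. Unset Printing Implicit Defensive.
Import Order.TTheory GRing.Theory Num.Theory.
Local Open Scope ring_scope.

Section Manin.
Variable R : realType.

(* Structure constants of a 3-dim Lie algebra in a basis:
   sc i j k = coefficient of the k-th basis vector in [e_i, e_j]. *)
Definition sc := 'I_3 -> 'I_3 -> 'I_3 -> R.

(* An element of the 6-dim double D = G (+) G~ in the basis
   X_1,X_2,X_3, X~^1,X~^2,X~^3 : (coordinates on X_i, coordinates on X~^i). *)
Definition dvec := (('I_3 -> R) * ('I_3 -> R))%type.

(* The bracket on D determined by [X_i,X_j] = f_ij^k X_k,
   [X~^i,X~^j] = ft^ij_k X~^k, [X_i,X~^j] = f_ki^j X~^k + ft^jk_i X_k,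
   extended bilinearly (and [X~^j,X_i] = -[X_i,X~^j]). *)
Definition dbr (f ft : sc) (u v : dvec) : dvec :=
  (fun k => \sum_(i < 3) \sum_(j < 3)
       (u.1 i * v.1 j * f i j k + u.1 i * v.2 j * ft j k i
        - u.2 j * v.1 i * ft j k i),
   fun k => \sum_(i < 3) \sum_(j < 3)
       (u.2 i * v.2 j * ft i j k + u.1 i * v.2 j * f k i j
        - u.2 j * v.1 i * f k i j)).

Definition dadd (u v : dvec) : dvec := (fun k => u.1 k + v.1 k, fun k => u.2 k + v.2 k).

Definition dform (u v : dvec) : R := \sum_(i < 3) (u.1 i * v.2 i + u.2 i * v.1 i).

Definition antisym (c : sc) := forall i j k, c i j k = - c j i k.

Definition is_manin (f ft : sc) : Prop :=
  [/\ antisym f, antisym ft,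
      (forall u v w : dvec,
          dadd (dadd (dbr f ft u (dbr f ft v w)) (dbr f ft v (dbr f ft w u)))
               (dbr f ft w (dbr f ft u v)) = ((fun _ => 0), (fun _ => 0))) &
      (forall u v w : dvec, dform (dbr f ft u v) w = dform u (dbr f ft v w))].

(* Change of basis X'_i = X_k A^k_i sends structure constants c to c'. *)
Definition basis_change (A : 'M[R]_3) (c c' : sc) : Prop :=
  forall i j l, \sum_(a < 3) \sum_(b < 3) A a i * A b j * c a b l
              = \sum_(k < 3) c' i j k * A l k.

Definition lie_iso (f f' : sc) : Prop :=
  exists A : 'M[R]_3, A \in unitmx /\ basis_change A f f'.

(* Isomorphism of Manin triples: X'_i = X_k A^k_i, X~'^j = (A^-1)^j_k X~^k. *)
Definition manin_iso (f ft f' ft' : sc) : Prop :=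
  exists A : 'M[R]_3, [/\ A \in unitmx, basis_change A f f'
                        & basis_change (invmx A)^T ft ft'].

Definition vec3 (a b c : R) : 'I_3 -> R :=
  fun k => if val k == 0%N then a else if val k == 1%N then b else c.

Definition mk_sc (c12 c23 c31 : 'I_3 -> R) : sc :=
  fun i j k =>
    match val i, val j with
    | 0%N, 1%N => c12 k | 1%N, 0%N => - c12 k
    | 1%N, 2%N => c23 k | 2%N, 1%N => - c23 k
    | 2%N, 0%N => c31 k | 0%N, 2%N => - c31 k
    | _, _ => 0
    end.

Definition v0 : 'I_3 -> R := vec3 0 0 0.

Definition f_VII0 : sc := mk_sc v0 (vec3 1 0 0) (vec3 0 1 0).

Inductive dual_case : Type :=
  | CaseI | CaseIIi | CaseIIii | CaseIV of R | CaseVi | CaseVii of R.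

Definition case_valid (c : dual_case) : Prop :=
  match c with
  | CaseIV b => b != 0
  | CaseVii b => 0 < b
  | _ => True
  end.

Definition case_sc (c : dual_case) : sc :=
  match c with
  | CaseI => mk_sc v0 v0 v0
  | CaseIIi => mk_sc (vec3 0 0 1) v0 v0
  | CaseIIii => mk_sc (vec3 0 0 (-1)) v0 v0
  | CaseIV b => mk_sc (vec3 0 (-b) b) v0 (vec3 0 0 b)
  | CaseVi => mk_sc (vec3 0 (-1) 0) v0 (vec3 0 0 1)
  | CaseVii b => mk_sc v0 (vec3 0 b 0) (vec3 (-b) 0 0)
  end.

End Manin.

(* Main.v *)
Require Import Defs.
From HB Require Import structures.
From mathcomp Require Import all_boot all_order all_algebra.
From mathcomp Require Import reals.
From mathcomp Require Import ring lra.
From Stdlib Require Import FunctionalExtensionality.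
Set Implicit Arguments. Unset Strict Implicit. Unset Printing Implicit Defensive.
Import Order.TTheory GRing.Theory Num.Theory.
Local Open Scope ring_scope.


Section Gen.
Variable R : realType.
Implicit Types (c d : sc R) (A M X Y : 'M[R]_3).

Definition o0 : 'I_3 := @Ordinal 3 0 isT.
Definition o1 : 'I_3 := @Ordinal 3 1 isT.
Definition o2 : 'I_3 := @Ordinal 3 2 isT.

Lemma sum3 (F : 'I_3 -> R) : \sum_(i < 3) F i = F o0 + F o1 + F o2.
Proof.
rewrite !big_ord_recr big_ord0 /= add0r.
by congr (F _ + F _ + F _); apply: val_inj.
Qed.

Lemma ord3P (i : 'I_3) : [\/ i = o0, i = o1 | i = o2].
Proof.
case: i => [[|[|[|n]]] Hn].
- by apply: Or31; apply: val_inj.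
- by apply: Or32; apply: val_inj.
- by apply: Or33; apply: val_inj.
- by [].
Qed.

Lemma funext3 (c d : sc R) : (forall i j k, c i j k = d i j k) -> c = d.
Proof.
move=> H; apply: functional_extensionality => i.
apply: functional_extensionality => j; apply: functional_extensionality => k; exact: H.
Qed.

Definition T1 X c : sc R := fun i j l => \sum_(a < 3) X a i * c a j l.
Definition T2 X c : sc R := fun i j l => \sum_(b < 3) X b j * c i b l.
Definition T3 X c : sc R := fun i j l => \sum_(k < 3) X l k * c i j k.

Ltac expand := rewrite ?sum3 ?mxE ?sum3.

Lemma T1T1 X Y c : T1 X (T1 Y c) = T1 (Y *m X) c.
Proof. apply: funext3 => i j l; rewrite /T1; expand; ring. Qed.
Lemma T2T2 X Y c : T2 X (T2 Y c) = T2 (Y *m X) c.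
Proof. apply: funext3 => i j l; rewrite /T2; expand; ring. Qed.
Lemma T3T3 X Y c : T3 X (T3 Y c) = T3 (X *m Y) c.
Proof. apply: funext3 => i j l; rewrite /T3; expand; ring. Qed.
Lemma T1T2 X Y c : T1 X (T2 Y c) = T2 Y (T1 X c).
Proof. apply: funext3 => i j l; rewrite /T1 /T2; expand; ring. Qed.
Lemma T1T3 X Y c : T1 X (T3 Y c) = T3 Y (T1 X c).
Proof. apply: funext3 => i j l; rewrite /T1 /T3; expand; ring. Qed.
Lemma T2T3 X Y c : T2 X (T3 Y c) = T3 Y (T2 X c).
Proof. apply: funext3 => i j l; rewrite /T2 /T3; expand; ring. Qed.
Lemma T1_1 c : T1 1%:M c = c.
Proof. apply: funext3 => i j l; rewrite /T1; expand.
by case: (ord3P i) => ->; rewrite /=; ring. Qed.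

Definition T12 X c := T1 X (T2 X c).

Lemma T12T12 X Y c : T12 X (T12 Y c) = T12 (Y *m X) c.
Proof. by rewrite /T12 T1T2 T1T1 -T1T2 T2T2 T1T2. Qed.
Lemma T12T3 X Y c : T12 X (T3 Y c) = T3 Y (T12 X c).
Proof. by rewrite /T12 T2T3 T1T3. Qed.
Lemma T12_1 c : T12 1%:M c = c.
Proof. apply: funext3 => i j l; rewrite /T12 /T1 /T2; expand.
by case: (ord3P i) => ->; case: (ord3P j) => ->; rewrite /=; ring. Qed.
Lemma T3_1 c : T3 1%:M c = c.
Proof. apply: funext3 => i j l; rewrite /T3; expand.
by case: (ord3P l) => ->; rewrite /=; ring. Qed.

Lemma bcL M c i j l : \sum_(a < 3) \sum_(b < 3) M a i * M b j * c a b l = T12 M c i j l.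
Proof. rewrite /T12 /T1 /T2; expand; ring. Qed.
Lemma bcR M c i j l : \sum_(k < 3) c i j k * M l k = T3 M c i j l.
Proof. rewrite /T3; expand; ring. Qed.

Lemma bcE M c c' : basis_change M c c' <-> T12 M c = T3 M c'.
Proof.
split => H.
- by apply: funext3 => i j l; rewrite -bcL -bcR; exact: H.
- by move=> i j l; rewrite bcL bcR H.
Qed.

Lemma bc_inv M c c' : M \in unitmx -> basis_change M c c' -> basis_change (invmx M) c' c.
Proof.
move=> u /bcE H; apply/bcE.
have -> : c' = T3 (invmx M) (T12 M c) by rewrite H T3T3 mulVmx // T3_1.
by rewrite T12T3 T12T12 mulmxV // T12_1.
Qed.

Lemma bc_comp M N c c' c'' : basis_change M c c' -> basis_change N c' c'' ->
  basis_change (M *m N) c c''.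
Proof.
move=> /bcE H1 /bcE H2; apply/bcE.
by rewrite -T12T12 H1 T12T3 H2 T3T3.
Qed.

Lemma bc_pull M c' : M \in unitmx -> exists c, basis_change M c c'.
Proof.
move=> u; exists (T12 (invmx M) (T3 M c')); apply/bcE.
by rewrite T12T12 mulVmx // T12_1.
Qed.

Lemma invmxM M N : M \in unitmx -> N \in unitmx ->
  invmx (M *m N) = invmx N *m invmx M.
Proof.
move=> uM uN; have uMN : M *m N \in unitmx by rewrite unitmx_mul uM uN.
have -> : invmx N *m invmx M = invmx (M *m N) *m ((M *m N) *m (invmx N *m invmx M)).
  by rewrite mulmxA mulVmx // mul1mx.
by rewrite -(mulmxA M) (mulmxA N) mulmxV // mul1mx mulmxV // mulmx1.
Qed.

Lemma antisym_T12 X c : antisym c -> antisym (T12 X c).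
Proof.
move=> Hc.
have Z : forall a l, c a a l = 0.
  by move=> a l; have := Hc a a l; lra.
move=> i j l; rewrite /T12 /T1 /T2; expand.
rewrite !Z !(Hc o1 o0) !(Hc o2 o0) !(Hc o2 o1); ring.
Qed.
Lemma antisym_T3 X c : antisym c -> antisym (T3 X c).
Proof.
move=> Hc i j l; rewrite /T3 -sumrN; apply: eq_bigr => k _; rewrite (Hc i j); ring.
Qed.

Lemma T2_1 c : T2 1%:M c = c.
Proof. apply: funext3 => i j l; rewrite /T2; expand.
by case: (ord3P j) => ->; rewrite /=; ring. Qed.

Definition Phi A (u : dvec R) : dvec R :=
  (fun k => \sum_(i < 3) A k i * u.1 i, fun k => \sum_(i < 3) invmx A i k * u.2 i).
Definition Psi A (u : dvec R) : dvec R :=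
  (fun k => \sum_(i < 3) invmx A k i * u.1 i, fun k => \sum_(i < 3) A i k * u.2 i).

Section Transport.
Variables (A : 'M[R]_3) (f ft f' ft' : sc R).
Hypothesis uA : A \in unitmx.
Hypothesis H1 : T12 A f = T3 A f'.
Hypothesis H2 : T12 (invmx A)^T ft = T3 (invmx A)^T ft'.

Lemma R1 i j k : \sum_(m < 3) A k m * f' i j m = T12 A f i j k.
Proof. by rewrite H1. Qed.

Lemma R2fun : T2 A^T ft' = T1 (invmx A)^T (T3 A^T ft).
Proof.
have -> : ft' = T3 A^T (T12 (invmx A)^T ft).
  by rewrite H2 T3T3 -trmx_mul mulVmx // trmx1 T3_1.
rewrite /T12 T2T3 -T1T2 T2T2 -trmx_mul mulmxV // trmx1 T2_1 T1T3 //.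
Qed.

Lemma R2 j k i : \sum_(m < 3) A k m * ft' j m i = T1 (invmx A)^T (T3 A^T ft) j k i.
Proof. rewrite -R2fun /T2; apply: eq_bigr => m _; by rewrite mxE. Qed.

Lemma R3 i j k : \sum_(m < 3) invmx A m k * ft' i j m = T12 (invmx A)^T ft i j k.
Proof. rewrite H2 /T3; apply: eq_bigr => m _; by rewrite mxE. Qed.

Lemma R4fun : T1 (invmx A) f' = T2 A (T3 (invmx A) f).
Proof.
have -> : f' = T3 (invmx A) (T12 A f) by rewrite H1 T3T3 mulVmx // T3_1.
by rewrite /T12 T1T3 T1T1 mulmxV // T1_1 T2T3.
Qed.

Lemma R4 k i j : \sum_(m < 3) invmx A m k * f' m i j = T2 A (T3 (invmx A) f) k i j.
Proof. by rewrite -R4fun. Qed.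

Lemma phi_dbr u v : Phi A (dbr f' ft' u v) = dbr f ft (Phi A u) (Phi A v).
Proof.
rewrite /Phi /dbr /=; congr pair; apply: functional_extensionality => k.
- transitivity (\sum_(i < 3) \sum_(j < 3) (u.1 i * v.1 j * T3 A f' i j k
     + u.1 i * v.2 j * T2 A^T ft' j k i
     - u.2 j * v.1 i * T2 A^T ft' j k i)).
    by rewrite /T3 /T2; expand; ring.
  rewrite -H1 R2fun /T12 /T1 /T2 /T3; expand; ring.
- transitivity (\sum_(i < 3) \sum_(j < 3) (u.2 i * v.2 j * T3 (invmx A)^T ft' i j k
     + u.1 i * v.2 j * T1 (invmx A) f' k i j
     - u.2 j * v.1 i * T1 (invmx A) f' k i j)).
    by rewrite /T3 /T1; expand; ring.
  rewrite -H2 R4fun /T12 /T1 /T2 /T3; expand; ring.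
Qed.

Lemma phi_dadd x y : Phi A (dadd x y) = dadd (Phi A x) (Phi A y).
Proof. rewrite /Phi /dadd /=; congr pair; apply: functional_extensionality => k; expand; ring. Qed.

Lemma phi0 : Phi A ((fun _ => 0), (fun _ => 0)) = ((fun _ => 0), (fun _ => 0)).
Proof. rewrite /Phi /=; congr pair; apply: functional_extensionality => k; expand; ring. Qed.

Lemma phi_psi u : Phi A (Psi A u) = u.
Proof.
case: u => u1 u2; rewrite /Phi /Psi /=; congr pair; apply: functional_extensionality => k.
- transitivity (\sum_(k' < 3) (A *m invmx A) k k' * u1 k'); first by expand; ring.
  rewrite mulmxV //; expand; case: (ord3P k) => ->; rewrite /=; ring.
- transitivity (\sum_(k' < 3) (A *m invmx A) k' k * u2 k'); first by expand; ring.
  rewrite mulmxV //; expand; case: (ord3P k) => ->; rewrite /=; ring.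
Qed.

Lemma dform_phi u v : dform (Phi A u) (Phi A v) = dform u v.
Proof.
transitivity (\sum_(i < 3) \sum_(j < 3) (u.1 i * v.2 j + u.2 j * v.1 i) * (invmx A *m A) j i).
  by rewrite /dform /Phi /=; expand; ring.
rewrite mulVmx // /dform; expand; rewrite /=; ring.
Qed.

Lemma manin_back : is_manin f' ft' -> is_manin f ft.
Proof.
case=> Af Aft J I; split.
- have -> : f = T3 A (T12 (invmx A) f').
    by rewrite -T12T3 -H1 T12T12 mulmxV // T12_1.
  by apply: antisym_T3; apply: antisym_T12.
- have -> : ft = T3 (invmx A)^T (T12 A^T ft').
    by rewrite -T12T3 -H2 T12T12 -trmx_mul mulmxV // trmx1 T12_1.
  by apply: antisym_T3; apply: antisym_T12.
- move=> u v w.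
  by rewrite -(phi_psi u) -(phi_psi v) -(phi_psi w) -!phi_dbr -!phi_dadd J phi0.
- move=> u v w.
  by rewrite -(phi_psi u) -(phi_psi v) -(phi_psi w) -!phi_dbr !dform_phi I.
Qed.
End Transport.

End Gen.


Section Conc.
Variable R : realType.
Ltac expand := rewrite ?sum3 ?mxE ?sum3.

Definition ex (i : 'I_3) : dvec R := (fun k => if k == i then 1 else 0, fun _ => 0).
Definition et (i : 'I_3) : dvec R := (fun _ => 0, fun k => if k == i then 1 else 0).

Lemma dbr_ex (f ft : sc R) a (w : dvec R) : dbr f ft (ex a) w =
  (fun k => \sum_(j < 3) (w.1 j * f a j k + w.2 j * ft j k a),
   fun k => \sum_(j < 3) w.2 j * f k a j).
Proof.
rewrite /dbr /ex /=; congr pair; apply: functional_extensionality => k; expand;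
  case: (ord3P a) => ->; rewrite /=; ring.
Qed.
Lemma dbr_et (f ft : sc R) a (w : dvec R) : dbr f ft (et a) w =
  (fun k => - \sum_(i < 3) w.1 i * ft a k i,
   fun k => \sum_(j < 3) w.2 j * ft a j k - \sum_(i < 3) w.1 i * f k i a).
Proof.
rewrite /dbr /et /=; congr pair; apply: functional_extensionality => k; expand;
  case: (ord3P a) => ->; rewrite /=; ring.
Qed.

Definition mkft (p1 p2 p3 q2 : R) : sc R :=
  mk_sc (vec3 p1 p2 p3) (vec3 0 q2 (-p1)) (vec3 (-q2) 0 (-p2)).

Ltac jsimp Z Aft :=
  rewrite !dbr_ex !dbr_et /dadd /= /ex /et /f_VII0 /mk_sc /vec3 /v0 /=; expand; rewrite /=;
  rewrite !Z !(Aft o1 o0) !(Aft o2 o1) !(Aft o0 o2);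
  rewrite ?(mul0r, mulr0, mul1r, mulr1, add0r, addr0, subr0, sub0r, oppr0).

Lemma extract (ft : sc R) : is_manin (f_VII0 R) ft ->
  ft = mkft (ft o0 o1 o0) (ft o0 o1 o1) (ft o0 o1 o2) (ft o1 o2 o1) /\
  ft o0 o1 o2 * ft o1 o2 o1 = 0.
Proof.
case=> Af Aft J I.
have Z : forall a l, ft a a l = 0.
  by move=> a l; have := Aft a a l; lra.
have E1 := congr1 (fun p => p.1 o1) (J (ex o0) (ex o1) (et o0)).
have E2 := congr1 (fun p => p.1 o2) (J (ex o0) (ex o2) (et o0)).
have E3 := congr1 (fun p => p.1 o1) (J (ex o0) (ex o2) (et o0)).
have E4 := congr1 (fun p => p.1 o2) (J (ex o0) (ex o2) (et o1)).
have E5 := congr1 (fun p => p.1 o1) (J (ex o1) (ex o2) (et o0)).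
have E6 := congr1 (fun p => p.1 o2) (J (ex o2) (et o0) (et o1)).
move: E1 E2 E3 E4 E5 E6; jsimp Z Aft => E1 E2 E3 E4 E5 E6.
have q1 : ft o1 o2 o0 = 0 by lra.
have r2 : ft o2 o0 o1 = 0 by lra.
have r3 : ft o2 o0 o2 = - ft o0 o1 o1 by lra.
have q3 : ft o1 o2 o2 = - ft o0 o1 o0 by lra.
have r1 : ft o2 o0 o0 = - ft o1 o2 o1 by lra.
split.
- apply: funext3 => i j k.
  case: (ord3P i) => ->; case: (ord3P j) => ->; case: (ord3P k) => ->;
  rewrite /mkft /mk_sc /vec3 /= ?Z ?(Aft o1 o0) ?(Aft o2 o1) ?(Aft o0 o2) ?q1 ?r2 ?r3 ?q3 ?r1 //; ring.
- move: E6; rewrite r3 q3 r1 => E6; nra.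
Qed.

Definition mkC (a b e x y : R) : 'M[R]_3 :=
  \matrix_(i < 3, j < 3)
    (if val i == 0%N then vec3 a b x j
     else if val i == 1%N then vec3 (- (e * b)) (e * a) y j
     else vec3 0 0 e j).

Ltac fsimp := rewrite /f_VII0 /mk_sc /vec3 /v0; expand; rewrite /=;
  rewrite ?(mul0r, mulr0, mul1r, mulr1, add0r, addr0, subr0, sub0r, oppr0).

Lemma auto_form C : C \in unitmx -> basis_change C (f_VII0 R) (f_VII0 R) ->
  exists a b e x y, [/\ C = mkC a b e x y, e * e = 1 & a * a + b * b != 0].
Proof.
move=> uC H.
have h1 := H o1 o2 o2. have h2 := H o2 o0 o2. have h3 := H o1 o2 o1.
have h4 := H o2 o0 o1. have h5 := H o1 o2 o0. have h6 := H o2 o0 o0.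
move: h1 h2 h3 h4 h5 h6; fsimp => h1 h2 h3 h4 h5 h6.
rewrite -h1 -h2 in h3 h4 h5 h6.
move: h3 h4 h5 h6; rewrite ?(mul0r, mulr0, mul1r, mulr1, add0r, addr0, subr0, sub0r, oppr0) => h3 h4 h5 h6.
have nz : C o0 o0 * C o0 o0 + C o0 o1 * C o0 o1 != 0.
  apply/negP => /eqP hz.
  have ha : C o0 o0 = 0 by nra.
  have hb : C o0 o1 = 0 by nra.
  have hc : C o1 o0 = 0 by rewrite -h3 hb; ring.
  have := congr1 (fun M : 'M[R]_3 => M o0 o0) (mulVmx uC).
  rewrite /= !mxE sum3 ha hc -h1 /=; move/eqP; rewrite !mulr0 !addr0 eq_sym oner_eq0 //.
have ee : C o2 o2 * C o2 o2 = 1.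
  have : (C o0 o0 * C o0 o0 + C o0 o1 * C o0 o1) * (1 - C o2 o2 * C o2 o2) = 0.
    have e1 : C o0 o0 = C o2 o2 * C o2 o2 * C o0 o0 by rewrite -{1}h5 -h4; ring.
    have e2 : C o0 o1 = C o2 o2 * C o2 o2 * C o0 o1 by rewrite -{1}h6 -h3; ring.
    have -> : (C o0 o0 * C o0 o0 + C o0 o1 * C o0 o1) * (1 - C o2 o2 * C o2 o2) =
      C o0 o0 * (C o0 o0 - C o2 o2 * C o2 o2 * C o0 o0) + C o0 o1 * (C o0 o1 - C o2 o2 * C o2 o2 * C o0 o1) by ring.
    rewrite -e1 -e2; ring.
  move/eqP; rewrite mulf_eq0 (negPf nz) /= subr_eq0 => /eqP <- //.
exists (C o0 o0), (C o0 o1), (C o2 o2), (C o0 o2), (C o1 o2); split => //.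
apply/matrixP => i j; rewrite mxE.
case: (ord3P i) => ->; case: (ord3P j) => ->; rewrite /vec3 /= //; try ring;
  by rewrite -?h1 -?h2 -?h3 -?h4; ring.
Qed.

Lemma eK (e u v : R) : e * e = 1 -> u * e = v * e -> u = v.
Proof. by move=> ee h; rewrite -[u]mulr1 -[v]mulr1 -ee !mulrA h. Qed.

Ltac msimp := rewrite /mkC /mkft /mk_sc /vec3; expand; rewrite /=;
  rewrite ?(mul0r, mulr0, mul1r, mulr1, add0r, addr0, subr0, sub0r, oppr0).

Lemma dual_inv a b e x y p1 p2 p3 q2 P1 P2 P3 Q2 :
  e * e = 1 -> a * a + b * b != 0 ->
  basis_change (mkC a b e x y)^T (mkft P1 P2 P3 Q2) (mkft p1 p2 p3 q2) ->
  q2 = e * Q2 /\ (Q2 = 0 -> p1 * p1 + p2 * p2 = (a * a + b * b) * (P1 * P1 + P2 * P2)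
                            /\ p3 = (a * a + b * b) * P3).
Proof.
move=> ee nz H.
have h1 := H o0 o2 o0. have h2 := H o0 o2 o1. have h3 := H o0 o2 o2.
have h4 := H o1 o2 o2. have h5 := H o0 o1 o2.
move: h1 h2 h3 h4 h5; msimp; rewrite ?opprK => h1 h2 h3 h4 h5.
have hq : q2 = e * Q2.
  have : (a * a + b * b) * (q2 - e * Q2) = 0.
    have -> : (a * a + b * b) * (q2 - e * Q2) = a * (q2 * a - a * e * Q2) + b * (q2 * b - b * e * Q2) by ring.
    by rewrite h1 h2 !subrr; ring.
  by move/eqP; rewrite mulf_eq0 (negPf nz) /= subr_eq0 => /eqP.
split => // hQ; rewrite hQ mulr0 in hq; rewrite hq in h3 h4 h5.
have hp2 : p2 = a * P2 - b * P1.
  apply: (eK ee); rewrite mul0r add0r in h3; rewrite -h3; ring.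
have hp1 : p1 = (a * P1 + b * P2) * e.
  apply: (eK ee); rewrite mul0r add0r in h4.
  have -> : (a * P1 + b * P2) * e * e = - (- (e * b) * e * P2 + e * a * e * - P1) by ring.
  rewrite h4; ring.
split.
- rewrite hp1 hp2; have -> : (a * P1 + b * P2) * e * ((a * P1 + b * P2) * e) = (a * P1 + b * P2) * (a * P1 + b * P2) * (e * e) by ring.
  rewrite ee; ring.
- apply: (eK ee); move: h5; rewrite hp1 hp2 => h5.
  have -> : p3 * e = ((a * P1 + b * P2) * e * x + (a * P2 - b * P1) * y + p3 * e) - ((a * P1 + b * P2) * e * x + (a * P2 - b * P1) * y) by ring.
  rewrite -h5; ring.
Qed.
End Conc.


Section Fin.
Variable R : realType.

Definition cp1 (c : dual_case R) : R := 0.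
Definition cp2 (c : dual_case R) : R :=
  match c with CaseIV b => - b | CaseVi => -1 | _ => 0 end.
Definition cp3 (c : dual_case R) : R :=
  match c with CaseIIi => 1 | CaseIIii => -1 | CaseIV b => b | _ => 0 end.
Definition cq2 (c : dual_case R) : R :=
  match c with CaseVii b => b | _ => 0 end.

Lemma case_mkft c : case_sc c = mkft (cp1 c) (cp2 c) (cp3 c) (cq2 c).
Proof.
apply: funext3 => i j k.
case: c => [|||b||b]; case: (ord3P i) => ->; case: (ord3P j) => ->; case: (ord3P k) => ->;
  rewrite /case_sc /v0 /mkft /mk_sc /vec3 /cp1 /=; ring.
Qed.

Lemma sq_pos (b : R) : b != 0 -> 0 < b * b.
Proof. move=> nb; case: (ltrgtP b 0) => h; [nra | nra | by rewrite h eqxx in nb]. Qed.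

Lemma uniq_cases c1 c2 : case_valid c1 -> case_valid c2 ->
  (exists a b e x y : R, [/\ e * e = 1, a * a + b * b != 0 &
     basis_change (mkC a b e x y)^T (case_sc c2) (case_sc c1)]) -> c1 = c2.
Proof.
move=> v1 v2 [a [b [e [x [y [ee nz H]]]]]].
rewrite !case_mkft in H.
have [hq hr] := dual_inv ee nz H.
have dpos : 0 < a * a + b * b.
  by rewrite lt0r nz /=; nra.
move: hq hr; clear H.
case: c1 v1 => [|||b1||b1] /= v1; case: c2 v2 => [|||b2||b2] /= v2;
  rewrite /cp1 /=; move=> hq hr //.
all: try (have hb1 := sq_pos v1); try (have hb2 := sq_pos v2).
all: try (have [h1 h2] := hr erefl).
all: try (exfalso; nra).
- congr CaseIV; apply/eqP; rewrite -subr_eq0; apply/eqP; apply: (mulfI v1); rewrite mulr0.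
  have e1 : b1 * b1 = (a * a + b * b) * b2 * b2.
    by move: h1; rewrite !mul0r !add0r !mulrNN => ->; ring.
  by rewrite mulrBr e1 -h2 subrr.
- congr CaseVii.
  have : (b1 - b2) * (b1 + b2) = 0.
    rewrite hq; transitivity ((e * e - 1) * b2 * b2); first ring.
    by rewrite ee subrr; ring.
  move/eqP; rewrite mulf_eq0 => /orP [/eqP h|/eqP h]; first by apply/eqP; rewrite -subr_eq0 h.
  exfalso; lra.
Qed.

Ltac expand := rewrite ?sum3 ?mxE ?sum3 ?mxE.

Lemma e_cases (e : R) : e * e = 1 -> e = 1 \/ e = -1.
Proof.
move=> ee; have : (e - 1) * (e + 1) = 0 by rewrite -[0](subrr 1) -{3}ee; ring.
move/eqP; rewrite mulf_eq0 => /orP [/eqP h|/eqP h]; [left|right].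
- by apply/eqP; rewrite -subr_eq0 h.
- by apply/eqP; rewrite -addr_eq0 h.
Qed.

Lemma auto_mkC (a b e x y : R) : e * e = 1 -> basis_change (mkC a b e x y) (f_VII0 R) (f_VII0 R).
Proof.
move=> /e_cases [] -> i j l;
case: (ord3P i) => ->; case: (ord3P j) => ->; case: (ord3P l) => ->;
  rewrite /mkC /f_VII0 /v0 /mk_sc /vec3; expand; rewrite /=; ring.
Qed.

Lemma unit_mkC (a b e x y : R) : e * e = 1 -> a * a + b * b != 0 -> mkC a b e x y \in unitmx.
Proof.
move=> ee nz.
pose d := a * a + b * b.
pose Ci : 'M[R]_3 := \matrix_(i < 3, j < 3)
    (if val i == 0%N then vec3 (a / d) (- (e * b) / d) (- (e * (a * x - e * b * y)) / d) j
     else if val i == 1%N then vec3 (b / d) (e * a / d) (- (e * (b * x + e * a * y)) / d) j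
     else vec3 0 0 e j).
suff : mkC a b e x y *m Ci = 1%:M by case/mulmx1_unit.
move: ee; move=> /e_cases [] he; apply/matrixP => i j;
case: (ord3P i) => ->; case: (ord3P j) => ->;
  rewrite /Ci /mkC; expand; rewrite /vec3 /= /d ?he; field; exact: nz.
Qed.

Lemma dual_suff (a b e x y p1 p2 p3 q2 P1 P2 P3 Q2 : R) :
  e * e = 1 -> q2 = e * Q2 -> p1 = e * (a * P1 + b * P2) + Q2 * y ->
  p2 = a * P2 - b * P1 - Q2 * x -> p3 = (a * a + b * b) * P3 ->
  basis_change (mkC a b e x y)^T (mkft P1 P2 P3 Q2) (mkft p1 p2 p3 q2).
Proof.
move=> /e_cases [] -> -> -> -> -> i j l;
case: (ord3P i) => ->; case: (ord3P j) => ->; case: (ord3P l) => ->;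
  rewrite /mkC /mkft /mk_sc /vec3; expand; rewrite /=; ring.
Qed.

End Fin.


Section Main.
Variable R : realType.

Lemma sqrt_inv_sq (t : R) : 0 < t -> (1 / Num.sqrt t) * (1 / Num.sqrt t) = 1 / t.
Proof.
move=> ht; have hs : Num.sqrt t * Num.sqrt t = t by rewrite -expr2 sqr_sqrtr // ltW.
have nz : Num.sqrt t != 0 by rewrite sqrtr_eq0 -ltNge.
have -> : 1 / Num.sqrt t * (1 / Num.sqrt t) = 1 / (Num.sqrt t * Num.sqrt t) by field.
by rewrite hs.
Qed.

Lemma exist_case (P1 P2 P3 Q2 : R) : P3 * Q2 = 0 ->
  exists c, case_valid c /\ exists a b e x y : R, [/\ e * e = 1, a * a + b * b != 0 &
   [/\ cq2 c = e * Q2, cp1 c = e * (a * P1 + b * P2) + Q2 * y,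
       cp2 c = a * P2 - b * P1 - Q2 * x & cp3 c = (a * a + b * b) * P3]].
Proof.
move=> h.
have [hQ|hQ] := eqVneq Q2 0.
- rewrite hQ.
  have [hP|hP] := eqVneq (P1 * P1 + P2 * P2) 0.
  + have h1 : P1 = 0 by move/eqP: hP; nra.
    have h2 : P2 = 0 by move/eqP: hP; nra.
    rewrite h1 h2.
    case: (ltrgtP P3 0) => h3.
    * exists (CaseIIii R); split => //.
      have ht : 0 < - P3 by lra.
      exists (1 / Num.sqrt (- P3)), 0, 1, 0, 0; split.
      -- by rewrite mulr1.
      -- rewrite mulr0 addr0 sqrt_inv_sq // div1r invr_eq0; exact: lt0r_neq0.
      -- rewrite /cq2 /cp1 /cp2 /cp3; split; try ring.
         rewrite mulr0 addr0 sqrt_inv_sq //; field; by rewrite neq_lt h3 ?orbT.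
    * exists (CaseIIi R); split => //.
      exists (1 / Num.sqrt P3), 0, 1, 0, 0; split.
      -- by rewrite mulr1.
      -- rewrite mulr0 addr0 sqrt_inv_sq // div1r invr_eq0; exact: lt0r_neq0.
      -- rewrite /cq2 /cp1 /cp2 /cp3; split; try ring.
         rewrite mulr0 addr0 sqrt_inv_sq //; field; by rewrite neq_lt h3 ?orbT.
    * exists (CaseI R); split => //.
      exists 1, 0, 1, 0, 0; split.
      -- by rewrite mulr1.
      -- by rewrite mulr0 addr0 mulr1 oner_eq0.
      -- rewrite /cq2 /cp1 /cp2 /cp3 h3; split; ring.
  + have [h3|h3] := eqVneq P3 0.
    * exists (CaseVi R); split => //.
      exists (- P2 / (P1 * P1 + P2 * P2)), (P1 / (P1 * P1 + P2 * P2)), 1, 0, 0; split.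
      -- by rewrite mulr1.
      -- have -> : - P2 / (P1 * P1 + P2 * P2) * (- P2 / (P1 * P1 + P2 * P2)) +
                P1 / (P1 * P1 + P2 * P2) * (P1 / (P1 * P1 + P2 * P2)) = 1 / (P1 * P1 + P2 * P2).
           by field.
         by rewrite div1r invr_eq0.
      -- rewrite /cq2 /cp1 /cp2 /cp3 h3; split; try ring; field => //.
    * exists (CaseIV ((P1 * P1 + P2 * P2) / P3)); split.
        by rewrite /= mulf_neq0 // invr_eq0.
      exists (- P2 / P3), (P1 / P3), 1, 0, 0; split.
      -- by rewrite mulr1.
      -- have -> : - P2 / P3 * (- P2 / P3) + P1 / P3 * (P1 / P3) = (P1 * P1 + P2 * P2) / (P3 * P3).
           by field.
         by rewrite mulf_neq0 // invr_eq0 mulf_neq0.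
      -- rewrite /cq2 /cp1 /cp2 /cp3; split; try ring; field => //.
- have h3 : P3 = 0 by move/eqP: h; rewrite mulf_eq0 (negPf hQ) orbF => /eqP.
  case: (ltrgtP Q2 0) => hq.
  + exists (CaseVii (- Q2)); split; first by rewrite /=; lra.
    exists 1, 0, (-1), (P2 / Q2), (P1 / Q2); split.
    * by rewrite mulrNN mulr1.
    * by rewrite mulr0 addr0 mulr1 oner_eq0.
    * rewrite /cq2 /cp1 /cp2 /cp3 h3; split; try ring; field => //.
  + exists (CaseVii Q2); split; first by [].
    exists 1, 0, 1, (P2 / Q2), (- P1 / Q2); split.
    * by rewrite mulr1.
    * by rewrite mulr0 addr0 mulr1 oner_eq0.
    * rewrite /cq2 /cp1 /cp2 /cp3 h3; split; try ring; field => //.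
  + by rewrite hq eqxx in hQ.
Qed.


Lemma uniq_main (f' ft' : sc R) (c1 c2 : dual_case R) :
  case_valid c1 -> case_valid c2 ->
  manin_iso (f_VII0 R) (case_sc c1) f' ft' ->
  manin_iso (f_VII0 R) (case_sc c2) f' ft' -> c1 = c2.
Proof.
move=> v1 v2 [A1 [u1 F1 D1]] [A2 [u2 F2 D2]].
have uC : A1 *m invmx A2 \in unitmx by rewrite unitmx_mul u1 unitmx_inv u2.
have FC : basis_change (A1 *m invmx A2) (f_VII0 R) (f_VII0 R) := bc_comp F1 (bc_inv u2 F2).
have D2' : basis_change A2^T ft' (case_sc c2).
  have u2' : (invmx A2)^T \in unitmx by rewrite unitmx_tr unitmx_inv.
  by have := bc_inv u2' D2; rewrite trmx_inv invmxK.
have DC := bc_comp D1 D2'.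
have uDC : (invmx A1)^T *m A2^T \in unitmx by rewrite unitmx_mul unitmx_tr unitmx_inv u1 unitmx_tr.
have DC' := bc_inv uDC DC.
have E : invmx ((invmx A1)^T *m A2^T) = (A1 *m invmx A2)^T.
  by rewrite invmxM ?unitmx_tr ?unitmx_inv // trmx_inv invmxK -trmx_inv trmx_mul.
rewrite E in DC'.
have [a [b [e [x [y [EC ee nz]]]]]] := auto_form uC FC.
rewrite EC in DC'.
apply: uniq_cases v1 v2 _.
by exists a, b, e, x, y; split.
Qed.

Theorem mainTheorem4' (f' ft' : sc R) :
  is_manin f' ft' -> lie_iso (f_VII0 R) f' ->
  exists! c : dual_case R,
    case_valid c /\ manin_iso (f_VII0 R) (case_sc c) f' ft'.
Proof.
move=> Hm [A0 [uA0 HA0]].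
have uM : (invmx A0)^T \in unitmx by rewrite unitmx_tr unitmx_inv.
have [ft0 H0] := bc_pull ft' uM.
have Hm0 : is_manin (f_VII0 R) ft0.
  by apply: (manin_back uA0 _ _ Hm); apply/bcE.
have [Eft0 hPQ] := extract Hm0.
have [c [vc [a [b [e [x [y [ee nz [hq hp1 hp2 hp3]]]]]]]]] := exist_case (ft0 o0 o1 o0) (ft0 o0 o1 o1) hPQ.
have uC : mkC a b e x y \in unitmx := unit_mkC x y ee nz.
have HC : basis_change (mkC a b e x y) (f_VII0 R) (f_VII0 R) := auto_mkC a b x y ee.
have HD : basis_change (mkC a b e x y)^T ft0 (case_sc c).
  rewrite case_mkft {1}Eft0; exact: dual_suff.
have HD' : basis_change (invmx (mkC a b e x y))^T (case_sc c) ft0.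
  by rewrite trmx_inv; apply: bc_inv => //; rewrite unitmx_tr.
have Hiso : manin_iso (f_VII0 R) (case_sc c) f' ft'.
  exists (mkC a b e x y *m A0); split.
  + by rewrite unitmx_mul uC.
  + exact: bc_comp HC HA0.
  + rewrite invmxM // trmx_mul; exact: bc_comp HD' H0.
exists c; split => //.
by move=> c' [vc' Hi']; exact: (uniq_main vc vc' Hiso Hi').
Qed.
End Main.

Theorem mainTheorem4 (R : realType) (f' ft' : sc R) :
  is_manin f' ft' -> lie_iso (f_VII0 R) f' ->
  exists! c : dual_case R,
    case_valid c /\ manin_iso (f_VII0 R) (case_sc c) f' ft'.
Proof. exact: mainTheorem4'. Qed.
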